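(* Consider Scheme 3 below with nonnegative initial data $f_i^0\ge0$ ($i=0,\dots,M$), and fixed $h=1/M$ and $\tau>0$ (no restriction on the ratio $\tau/h^2$). Then the solution is nonnegative and, as $n\to\infty$, $$f_i^n\to0\ \ (i=1,\dots,M-1),\qquad \tfrac h2 f_0^n+\tfrac h2 f_M^n\to P_0,\qquad \tfrac h2 x_Mf_M^n\to E_0,$$ so that $\tfrac h2 f_0^n\to P_0-E_0$ and $\tfrac h2 f_M^n\to E_0$.
   Context: Let $M\ge2$ be an integer, $h=1/M$, $x_i=ih$ ($x_M=1$), $\tau>0$, $D_i=x_i(1-x_i)$, $\gamma=\tau/h^2$. Scheme 3: given $f^n_0,\dots,f^n_M$, the values $f^{n+1}$ satisfy $$\frac{f^{n+1}_i-f^{n}_i}{\tau}-\frac{D_{i+1}f^{n+1}_{i+1}-2D_{i}f^{n+1}_{i}+D_{i-1}f^{n+1}_{i-1}}{h^2}=0\quad(i=1,\dots,M-1),$$ $$f^{n+1}_0=f^{n}_0+2D_1\gamma f^{n+1}_1,\qquad f^{n+1}_M=f^{n}_M+2D_{M-1}\gamma f^{n+1}_{M-1}.$$ Initial discrete probability and expectation: $P_0=\tfrac h2 f_0^0+\tfrac h2 f_M^0+\sum_{i=1}^{M-1}f_i^0h$, $E_0=\tfrac h2 x_Mf_M^0+\sum_{i=1}^{M-1}x_if_i^0h$. *)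

(* Defs.v *)
From Stdlib Require Import Reals Lra Lia.
Open Scope R_scope.

Fixpoint sumR (g : nat -> R) (a n : nat) : R :=
  match n with
  | O => 0
  | S k => sumR g a k + g (a + k)%nat
  end.

Definition hh (M : nat) : R := 1 / INR M.
Definition xx (M i : nat) : R := INR i * hh M.
Definition DD (M i : nat) : R := xx M i * (1 - xx M i).
Definition gam (M : nat) (tau : R) : R := tau / (hh M ^ 2).

(* f n i = f^n_i.  Scheme 3 relating step n and step n+1. *)
Definition scheme3_step (M : nat) (tau : R) (f : nat -> nat -> R) (n : nat) : Prop :=
  (forall i : nat, (1 <= i <= M - 1)%nat ->
     (f (S n) i - f n i) / tau
     - (DD M (i + 1) * f (S n) (i + 1)%nat - 2 * DD M i * f (S n) i
        + DD M (i - 1) * f (S n) (i - 1)%nat) / (hh M ^ 2) = 0)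
  /\ f (S n) 0%nat = f n 0%nat + 2 * DD M 1 * gam M tau * f (S n) 1%nat
  /\ f (S n) M = f n M + 2 * DD M (M - 1) * gam M tau * f (S n) (M - 1)%nat.

Definition P0 (M : nat) (f0 : nat -> R) : R :=
  hh M / 2 * f0 0%nat + hh M / 2 * f0 M + sumR (fun i => f0 i * hh M) 1 (M - 1).
Definition E0 (M : nat) (f0 : nat -> R) : R :=
  hh M / 2 * xx M M * f0 M + sumR (fun i => xx M i * f0 i * hh M) 1 (M - 1).

(* Main.v *)
Require Import Defs.
From Stdlib Require Import Reals Lra Lia.
Open Scope R_scope.

Lemma sumR_ext F G a n : (forall i, (a <= i < a + n)%nat -> F i = G i) -> sumR F a n = sumR G a n.
Proof. induction n; simpl; intros H; auto. rewrite IHn by (intros; apply H; lia). rewrite H by lia. auto. Qed.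
Lemma sumR_plus F G a n : sumR (fun i => F i + G i) a n = sumR F a n + sumR G a n.
Proof. induction n; simpl; [lra|]. rewrite IHn; ring. Qed.
Lemma sumR_scal c F a n : sumR (fun i => c * F i) a n = c * sumR F a n.
Proof. induction n; simpl; [ring|]. rewrite IHn; ring. Qed.
Lemma sumR_le F G a n : (forall i, (a <= i < a + n)%nat -> F i <= G i) -> sumR F a n <= sumR G a n.
Proof. induction n; simpl; intros H; [lra|]. apply Rplus_le_compat. apply IHn; intros; apply H; lia. apply H; lia. Qed.
Lemma sumR_const c a n : sumR (fun _ => c) a n = INR n * c.
Proof. induction n; simpl sumR; [simpl; ring|]. rewrite IHn, S_INR; ring. Qed.

Lemma tele (u : nat -> R) n : sumR (fun i => u (i+1)%nat - 2*u i + u (i-1)%nat) 1 n = (u (n+1)%nat - u n) - (u 1%nat - u 0%nat).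
Proof. induction n; simpl sumR. { replace (0+1)%nat with 1%nat by lia. simpl; ring. } rewrite IHn.
 replace (S (n + 1))%nat with (S n + 1)%nat by lia. replace (n-0)%nat with n by lia.
 replace (n+1)%nat with (S n) by lia. ring. Qed.

Lemma tele2 (u : nat -> R) n : sumR (fun i => INR i * (u (i+1)%nat - 2*u i + u (i-1)%nat)) 1 n = INR n * (u (n+1)%nat - u n) - u n + u 0%nat.
Proof. induction n; simpl sumR. { replace (0+1)%nat with 1%nat by lia. simpl; ring. } rewrite IHn.
 replace (S (n + 1))%nat with (S n + 1)%nat by lia. replace (n-0)%nat with n by lia.
 replace (n+1)%nat with (S n) by lia.
 replace (match n with 0%nat => 1 | S _ => INR n + 1 end) with (INR (S n)) by reflexivity. rewrite S_INR. ring. Qed.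

Lemma argmin (phi : nat -> R) (a n : nat) : exists k, (a <= k <= a + n)%nat /\ forall j, (a <= j <= a + n)%nat -> phi k <= phi j.
Proof. induction n.
- exists a; split; [lia|]. intros j Hj; replace j with a by lia; lra.
- destruct IHn as [k [Hk Hmin]]. destruct (Rle_dec (phi k) (phi (a + S n)%nat)).
  + exists k. split; [lia|]. intros j Hj. destruct (Nat.eq_dec j (a + S n)). subst; auto. apply Hmin; lia.
  + exists (a+S n)%nat. split; [lia|]. intros j Hj. destruct (Nat.eq_dec j (a+S n)). subst; lra.
    specialize (Hmin j ltac:(lia)); lra.
Qed.


Lemma hh_pos (M : nat) (HM : (2 <= M)%nat) : 0 < hh M.
Proof. unfold hh. assert (0 < INR M) by (apply lt_0_INR; lia). apply Rdiv_lt_0_compat; lra. Qed.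
Lemma hh_M (M : nat) (HM : (2 <= M)%nat) : INR M * hh M = 1.
Proof. unfold hh. assert (0 < INR M) by (apply lt_0_INR; lia). field; lra. Qed.
Lemma xx_M (M : nat) (HM : (2 <= M)%nat) : xx M M = 1.
Proof. unfold xx. apply hh_M; auto. Qed.
Lemma DD_0 (M : nat) (HM : (2 <= M)%nat) : DD M 0 = 0.
Proof. unfold DD, xx. simpl. ring. Qed.
Lemma DD_M (M : nat) (HM : (2 <= M)%nat) : DD M M = 0.
Proof. unfold DD. rewrite xx_M by auto. ring. Qed.
Lemma xx_bounds (M : nat) (HM : (2 <= M)%nat) i : (1 <= i <= M - 1)%nat -> 0 < xx M i < 1.
Proof. intros Hi. unfold xx. pose proof (hh_pos M HM). pose proof (hh_M M HM).
 assert (0 < INR i) by (apply lt_0_INR; lia). assert (INR i < INR M) by (apply lt_INR; lia).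
 split. nra. nra. Qed.
Lemma DD_pos (M : nat) (HM : (2 <= M)%nat) i : (1 <= i <= M - 1)%nat -> 0 < DD M i.
Proof. intros Hi. destruct (xx_bounds M HM i Hi). unfold DD. nra. Qed.
Lemma DD_diff (M : nat) i : (1 <= i)%nat -> 2 * DD M i - DD M (i+1) - DD M (i-1) = 2 * hh M ^ 2.
Proof. intros Hi. unfold DD, xx. rewrite plus_INR, minus_INR by lia. simpl INR. ring. Qed.

Definition Lop (M : nat) (tau : R) (g : nat -> R) (i : nat) : R :=
  g i + gam M tau * (2 * DD M i * g i - DD M (i+1) * g (i+1)%nat - DD M (i-1) * g (i-1)%nat).

Lemma gam_pos M tau : (2 <= M)%nat -> 0 < tau -> 0 < gam M tau.
Proof. intros. pose proof (hh_pos M H). unfold gam. apply Rdiv_lt_0_compat; auto. apply pow_lt; auto. Qed.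

Lemma gam_h M tau : (2 <= M)%nat -> gam M tau * hh M ^ 2 = tau.
Proof. intros. pose proof (hh_pos M H). unfold gam. field. lra. Qed.

Lemma maxp M tau w : (2<=M)%nat -> 0<tau -> (forall i, (1<=i<=M-1)%nat -> 0 <= Lop M tau w i) ->
  forall i, (1<=i<=M-1)%nat -> 0 <= w i.
Proof. intros HM Ht HL.
destruct (argmin (fun j => DD M j * w j) 1 (M-2)) as [k [Hk Hmin]].
assert (Hk': (1<=k<=M-1)%nat) by lia.
assert (Hmin': forall j, (1<=j<=M-1)%nat -> DD M k * w k <= DD M j * w j) by (intros; apply Hmin; lia).
destruct (Rlt_le_dec (DD M k * w k) 0) as [Hneg|Hpos].
- exfalso. specialize (HL k Hk'). unfold Lop in HL.
  assert (H1: DD M k * w k <= DD M (k+1) * w (k+1)%nat).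
  { destruct (Nat.eq_dec (k+1) M) as [e|e]. rewrite e, DD_M by auto; lra. apply Hmin'; lia. }
  assert (H2: DD M k * w k <= DD M (k-1) * w (k-1)%nat).
  { destruct (Nat.eq_dec (k-1) 0) as [e|e]. rewrite e, DD_0 by auto; lra. apply Hmin'; lia. }
  assert (Dk: 0 < DD M k) by (apply DD_pos; auto).
  assert (wk: w k < 0). { destruct (Rlt_le_dec (w k) 0); auto. exfalso. nra. }
  assert (Hg: 0 < gam M tau) by (apply gam_pos; auto).
  assert (0 <= gam M tau * - (2 * DD M k * w k - DD M (k+1) * w (k+1)%nat - DD M (k-1) * w (k-1)%nat))
    by (apply Rmult_le_pos; lra).
  lra.
- intros i Hi. specialize (Hmin' i Hi). assert (0 < DD M i) by (apply DD_pos; auto).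
  destruct (Rlt_le_dec (w i) 0); auto. nra.
Qed.

Lemma scheme_Lop M tau f n : (2<=M)%nat -> 0 < tau -> scheme3_step M tau f n ->
  forall i, (1<=i<=M-1)%nat -> Lop M tau (f (S n)) i = f n i.
Proof. intros HM Ht [H _] i Hi. specialize (H i Hi). pose proof (hh_pos M HM).
 set (S0 := DD M (i + 1) * f (S n) (i + 1)%nat - 2 * DD M i * f (S n) i + DD M (i - 1) * f (S n) (i - 1)%nat) in H.
 assert (E: f (S n) i - f n i = gam M tau * S0).
 { unfold gam. assert (hh M ^ 2 > 0) by (apply pow_lt; auto).
   replace (f (S n) i - f n i) with (tau * ((f (S n) i - f n i)/tau)) by (field; lra).
   replace ((f (S n) i - f n i)/tau) with (S0 / hh M ^2) by lra. field. lra. }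
 unfold Lop. replace (gam M tau * (2 * DD M i * f (S n) i - DD M (i + 1) * f (S n) (i + 1)%nat - DD M (i - 1) * f (S n) (i - 1)%nat))
  with (- (gam M tau * S0)) by (unfold S0; ring). lra.
Qed.

Lemma Lop_affine M tau c g i : (2<=M)%nat -> (1 <= i)%nat ->
  Lop M tau (fun j => c - g j) i = c * (1 + 2 * tau) - Lop M tau g i.
Proof. intros HM Hi. unfold Lop.
 transitivity (c * (1 + gam M tau * (2 * DD M i - DD M (i+1) - DD M (i-1))) - Lop M tau g i).
 unfold Lop; ring. rewrite DD_diff by auto.
 replace (c * (1 + gam M tau * (2 * hh M ^ 2))) with (c * (1 + 2 * (gam M tau * hh M ^ 2))) by ring.
 rewrite gam_h by auto. unfold Lop. ring.
Qed.

Lemma geom a C r : 0 <= r < 1 -> (forall n, 0 <= a n <= C * r ^ n) -> Un_cv a 0.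
Proof. intros Hr Ha eps He. assert (HC: 0 <= C) by (destruct (Ha 0%nat); simpl in *; lra).
 assert (Hy: 0 < eps / (C+1)) by (apply Rdiv_lt_0_compat; lra).
 destruct (pow_lt_1_zero r ltac:(rewrite Rabs_pos_eq; lra) _ Hy) as [N HN].
 exists N. intros n Hn. specialize (HN n Hn). specialize (Ha n).
 assert (0 <= r ^ n) by (apply pow_le; lra). rewrite Rabs_pos_eq in HN by auto.
 unfold R_dist. rewrite Rminus_0_r, Rabs_pos_eq by lra.
 assert ((C+1) * r ^ n < (C+1) * (eps / (C+1))) by (apply Rmult_lt_compat_l; lra).
 replace ((C+1) * (eps / (C+1))) with eps in H0 by (field; lra). nra.
Qed.

Lemma cv_ext a b l : (forall n, a n = b n) -> Un_cv a l -> Un_cv b l.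
Proof. intros E H eps He. destruct (H eps He) as [N HN]. exists N; intros n Hn. rewrite <- E. auto. Qed.

Lemma cv_sub c a : Un_cv a 0 -> Un_cv (fun n => c - a n) c.
Proof. intros H eps He. destruct (H eps He) as [N HN]. exists N; intros n Hn. specialize (HN n Hn).
 unfold R_dist in *. replace (c - a n - c) with (- (a n - 0)) by ring. rewrite Rabs_Ropp. auto. Qed.

Theorem theorem3 (M : nat) (tau : R) (f : nat -> nat -> R) :
  (2 <= M)%nat -> 0 < tau ->
  (forall i : nat, (i <= M)%nat -> 0 <= f 0%nat i) ->
  (forall n : nat, scheme3_step M tau f n) ->
  (forall n i : nat, (i <= M)%nat -> 0 <= f n i)
  /\ (forall i : nat, (1 <= i <= M - 1)%nat -> Un_cv (fun n => f n i) 0)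
  /\ Un_cv (fun n => hh M / 2 * f n 0%nat + hh M / 2 * f n M) (P0 M (f 0%nat))
  /\ Un_cv (fun n => hh M / 2 * xx M M * f n M) (E0 M (f 0%nat))
  /\ Un_cv (fun n => hh M / 2 * f n 0%nat) (P0 M (f 0%nat) - E0 M (f 0%nat))
  /\ Un_cv (fun n => hh M / 2 * f n M) (E0 M (f 0%nat)).
Proof.
intros HM Ht H0 Hs.
pose proof (hh_pos M HM) as Hh. pose proof (gam_pos M tau HM Ht) as Hg.
assert (Hnn: forall n i, (i <= M)%nat -> 0 <= f n i).
{ induction n; auto. intros i Hi.
  assert (Hint: forall j, (1<=j<=M-1)%nat -> 0 <= f (S n) j).
  { apply (maxp M tau); auto. intros j Hj. rewrite (scheme_Lop M tau f n) by auto. apply IHn; lia. }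
  destruct (Hs n) as [_ [Hb0 HbM]].
  destruct (Nat.eq_dec i 0) as [e|e].
  { subst. rewrite Hb0. assert (0 < DD M 1) by (apply DD_pos; auto; lia).
    assert (0 <= f (S n) 1%nat) by (apply Hint; lia).
    apply Rplus_le_le_0_compat; [apply IHn; lia|]. apply Rmult_le_pos; [apply Rmult_le_pos; [apply Rmult_le_pos|]|]; lra. }
  destruct (Nat.eq_dec i M) as [e'|e'].
  { subst. rewrite HbM. assert (0 < DD M (M-1)) by (apply DD_pos; auto; lia).
    assert (0 <= f (S n) (M-1)%nat) by (apply Hint; lia).
    apply Rplus_le_le_0_compat; [apply IHn; lia|]. apply Rmult_le_pos; [apply Rmult_le_pos; [apply Rmult_le_pos|]|]; lra. }
  apply Hint; lia. }
set (rho := / (1 + 2 * tau)).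
assert (Hrho: 0 <= rho < 1).
{ unfold rho. split. left; apply Rinv_0_lt_compat; lra. rewrite <- Rinv_1. apply Rinv_lt_contravar; lra. }
destruct (argmin (fun j => - f 0%nat j) 1 (M-2)) as [k [Hk Hk2]].
set (K := f 0%nat k).
assert (Hb: forall n i, (1<=i<=M-1)%nat -> f n i <= K * rho ^ n).
{ induction n.
  - intros i Hi. simpl. specialize (Hk2 i ltac:(lia)). unfold K. simpl in Hk2. lra.
  - intros i Hi.
    assert (Hw: forall j, (1<=j<=M-1)%nat -> 0 <= K * rho ^ (S n) - f (S n) j).
    { apply (maxp M tau (fun j => K * rho ^ (S n) - f (S n) j)); auto. intros j Hj.
      rewrite Lop_affine by (auto; lia). rewrite (scheme_Lop M tau f n) by auto.
      replace (K * rho ^ S n * (1 + 2 * tau)) with (K * rho ^ n) by (unfold rho; simpl; field; lra).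
      specialize (IHn j Hj). lra. }
    specialize (Hw i Hi). lra. }
assert (Hcv: forall i, (1 <= i <= M - 1)%nat -> Un_cv (fun n => f n i) 0).
{ intros i Hi. apply (geom _ K rho Hrho). intros n. split. apply Hnn; lia. apply Hb; auto. }
set (Sint := fun n => sumR (fun i => f n i * hh M) 1 (M-1)).
set (Sx := fun n => sumR (fun i => xx M i * f n i * hh M) 1 (M-1)).
assert (HSint: Un_cv Sint 0).
{ apply (geom _ (INR (M-1) * (K * hh M)) rho Hrho). intros n. unfold Sint. split.
  - pose proof (sumR_le (fun _ => 0) (fun i => f n i * hh M) 1 (M-1)) as HH.
    rewrite sumR_const in HH. replace (INR (M-1) * 0) with 0 in HH by ring. apply HH.
    intros i Hi. apply Rmult_le_pos; [apply Hnn; lia | lra].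
  - pose proof (sumR_le (fun i => f n i * hh M) (fun _ => K * rho ^ n * hh M) 1 (M-1)) as HH.
    rewrite sumR_const in HH. replace (INR (M - 1) * (K * hh M) * rho ^ n) with (INR (M - 1) * (K * rho ^ n * hh M)) by ring.
    apply HH. intros i Hi. apply Rmult_le_compat_r; [lra|]. apply Hb; lia. }
assert (HSx: Un_cv Sx 0).
{ apply (geom _ (INR (M-1) * (K * hh M)) rho Hrho). intros n. unfold Sx. split.
  - pose proof (sumR_le (fun _ => 0) (fun i => xx M i * f n i * hh M) 1 (M-1)) as HH.
    rewrite sumR_const in HH. replace (INR (M-1) * 0) with 0 in HH by ring. apply HH.
    intros i Hi. destruct (xx_bounds M HM i ltac:(lia)). assert (0 <= f n i) by (apply Hnn; lia).
    apply Rmult_le_pos; [apply Rmult_le_pos|]; lra.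
  - pose proof (sumR_le (fun i => xx M i * f n i * hh M) (fun _ => K * rho ^ n * hh M) 1 (M-1)) as HH.
    rewrite sumR_const in HH. replace (INR (M - 1) * (K * hh M) * rho ^ n) with (INR (M - 1) * (K * rho ^ n * hh M)) by ring.
    apply HH. intros i Hi. apply Rmult_le_compat_r; [lra|].
    destruct (xx_bounds M HM i ltac:(lia)). assert (0 <= f n i) by (apply Hnn; lia).
    assert (f n i <= K * rho ^ n) by (apply Hb; lia). nra. }
assert (HP: forall n, hh M / 2 * f n 0%nat + hh M / 2 * f n M + Sint n = P0 M (f 0%nat)).
{ induction n. reflexivity. rewrite <- IHn.
  destruct (Hs n) as [_ [Hb0 HbM]].
  assert (HS: Sint (S n) = Sint n + hh M * gam M tau *
     sumR (fun i => DD M (i+1) * f (S n) (i+1)%nat - 2 * (DD M i * f (S n) i) + DD M (i-1) * f (S n) (i-1)%nat) 1 (M-1)).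
  { unfold Sint. rewrite <- sumR_scal, <- sumR_plus. apply sumR_ext. intros i Hi.
    rewrite <- (scheme_Lop M tau f n HM Ht (Hs n) i) by lia. unfold Lop. ring. }
  rewrite HS, (tele (fun j => DD M j * f (S n) j)).
  replace (M-1+1)%nat with M by lia. rewrite DD_M, DD_0, Hb0, HbM by auto. field. }
assert (HE: forall n, hh M / 2 * xx M M * f n M + Sx n = E0 M (f 0%nat)).
{ induction n. reflexivity. rewrite <- IHn.
  destruct (Hs n) as [_ [Hb0 HbM]].
  assert (HS: Sx (S n) = Sx n + hh M * gam M tau * hh M *
     sumR (fun i => INR i * (DD M (i+1) * f (S n) (i+1)%nat - 2 * (DD M i * f (S n) i) + DD M (i-1) * f (S n) (i-1)%nat)) 1 (M-1)).
  { unfold Sx. rewrite <- sumR_scal, <- sumR_plus. apply sumR_ext. intros i Hi.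
    rewrite <- (scheme_Lop M tau f n HM Ht (Hs n) i) by lia. unfold Lop, xx. ring. }
  rewrite HS, (tele2 (fun j => DD M j * f (S n) j)).
  replace (M-1+1)%nat with M by lia. rewrite DD_M, DD_0, HbM, xx_M by auto.
  rewrite minus_INR by lia. simpl INR.
  assert (HI: INR M = 1 / hh M) by (apply (Rmult_eq_reg_r (hh M)); [rewrite hh_M by auto; field; lra | lra]).
  rewrite HI. field. lra. }
assert (C1: Un_cv (fun n => hh M / 2 * f n 0%nat + hh M / 2 * f n M) (P0 M (f 0%nat))).
{ apply (cv_ext (fun n => P0 M (f 0%nat) - Sint n)). intros n. rewrite <- (HP n). ring.
  apply cv_sub; auto. }
assert (C2: Un_cv (fun n => hh M / 2 * xx M M * f n M) (E0 M (f 0%nat))).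
{ apply (cv_ext (fun n => E0 M (f 0%nat) - Sx n)). intros n. rewrite <- (HE n). ring.
  apply cv_sub; auto. }
split; [auto|]. split; [auto|]. split; [auto|]. split; [auto|]. split.
- apply (cv_ext (fun n => (hh M / 2 * f n 0%nat + hh M / 2 * f n M) - hh M / 2 * xx M M * f n M)).
  intros n. rewrite xx_M by auto. ring. apply CV_minus; auto.
- apply (cv_ext (fun n => hh M / 2 * xx M M * f n M)). intros n. rewrite xx_M by auto. ring. auto.
Qed.
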